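(* Let $s_1 \geq s_2 \geq \dots \geq s_n$ be the side lengths of a sequence of squares with $s_1 \leq 0.295$. Consider the following packing procedure in the unit disk $\mathcal{D}$: an axis-parallel square container $\mathcal{X}$ of side length $1.388$ is placed concentric with $\mathcal{D}$, and four square containers $\mathcal{X}_1,\dots,\mathcal{X}_4$ of side length $0.295$ are placed inside $\mathcal{D}$, one adjacent to each side of $\mathcal{X}$ (outside $\mathcal{X}$); the square $s_i$ is placed into $\mathcal{X}_i$ for $i = 1,\dots,4$, and the squares $s_5,\dots,s_n$ are packed into $\mathcal{X}$ using \textsc{Shelf Packing}. If this procedure fails to pack the sequence, then $\sum_{i=1}^n s_i^2 > \frac{8}{5}$.
   Context: $\mathcal{D}$ denotes the disk of radius $1$. \textsc{Shelf Packing} into an axis-parallel square container processes the squares in order of non-increasing side length and places them axis-parallel in horizontal shelves stacked from the bottom upward: the first square of a shelf determines its height, subsequent squares are placed next to each other along the shelf's bottom from left to right, and when the next square does not fit into the remaining width of the current shelf, a new shelf is opened on top of the current one starting with that square. It fails if some square would have to be placed in a shelf exceeding the container's height. The procedure fails to pack the sequence if \textsc{Shelf Packing} fails to pack $s_5,\dots,s_n$ into $\mathcal{X}$. *)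

(* Defs.v *)
From Stdlib Require Import Reals Lra List Sorted.
Open Scope R_scope.

(* State of the current (open) shelf: y = bottom coordinate of the shelf,
   h = its height (side of its first square), w = width already used. *)
Fixpoint shelf_pack_from (L y h w : R) (s : list R) : bool :=
  match s with
  | nil => true
  | a :: t =>
      if Rle_dec (w + a) L then shelf_pack_from L y h (w + a) t
      else if Rle_dec (y + h + a) L then shelf_pack_from L (y + h) a a t
      else false
  end.

Definition shelf_packs (L : R) (s : list R) : bool :=
  match s with
  | nil => true
  | a :: t => if Rle_dec a L then shelf_pack_from L 0 a a t else false
  end.

Definition sum_sq (s : list R) : R := fold_right (fun x acc => x ^ 2 + acc) 0 s.

(* Main.v *)
Require Import Defs.
From Stdlib Require Import Reals List Sorted Lra Psatz.
Open Scope R_scope.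

Lemma key (L H : R) (t : list R) : forall y h w m,
  0 <= L - H ->
  Sorted Rge (m :: t) ->
  Forall (fun x => 0 < x /\ x <= H) t ->
  shelf_pack_from L y h w t = false ->
  sum_sq t > (L - H) * (L - y - h) + Rmin 0 (m * (H - w)).
Proof.
  induction t as [|a t IH]; intros y h w m Hc Hs Hf Hp.
  - simpl in Hp; discriminate.
  - inversion Hf as [|? ? [Ha0 HaH] Hf']; subst.
    inversion Hs as [|? ? Hs' Hrel]; subst.
    inversion Hrel as [|? ? Hma]; subst.
    simpl in Hp |- *.
    destruct (Rle_dec (w + a) L) as [Hfit|Hnf].
    + specialize (IH y h (w + a) a Hc Hs' Hf' Hp).
      unfold Rmin in *.
      destruct (Rle_dec 0 (a * (H - (w + a)))); destruct (Rle_dec 0 (m * (H - w))); try nra.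
    + destruct (Rle_dec (y + h + a) L) as [Hsh|Hns].
      * specialize (IH (y + h) a a a Hc Hs' Hf' Hp).
        unfold Rmin in *.
        destruct (Rle_dec 0 (a * (H - a))); destruct (Rle_dec 0 (m * (H - w))); try nra.
        all: assert (Hm : 0 < m) by lra.
        all: assert (Hac : H - w < a - (L - H)) by lra.
        all: try (assert (0 <= H - w) by nra; assert (0 < a * (a - (L - H))) by (apply Rmult_lt_0_compat; lra); nra).
        all: assert (H - w < 0) by nra; assert (m * (H - w) <= a * (H - w)) by nra;
             assert (a * (H - w) < a * (a - (L - H))) by (apply Rmult_lt_compat_l; lra); nra.
      * unfold Rmin.
        assert (0 <= sum_sq t).
        { clear -Hf'. induction t; simpl. lra. inversion Hf'; subst. specialize (IHt H3). nra. }
        destruct (Rle_dec 0 (m * (H - w))); try nra.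
        all: assert (Hm : 0 < m) by lra.
        all: assert (Hac : H - w < a - (L - H)) by lra.
        all: assert ((L - H) * (L - y - h) <= (L - H) * a) by (apply Rmult_le_compat_l; lra).
        all: try (assert (0 <= H - w) by nra; assert (0 < a * (a - (L - H))) by (apply Rmult_lt_0_compat; lra); nra).
        all: assert (H - w < 0) by nra; assert (m * (H - w) <= a * (H - w)) by nra;
             assert (a * (H - w) < a * (a - (L - H))) by (apply Rmult_lt_compat_l; lra); nra.
Qed.

Theorem lemma15 (s : list R) :
  Forall (fun x => 0 < x) s ->
  Sorted Rge s ->
  (forall a, hd_error s = Some a -> a <= 295 / 1000) ->
  (* the procedure fails: Shelf Packing fails to pack s_5,...,s_n into X *)
  shelf_packs (1388 / 1000) (skipn 4 s) = false ->
  sum_sq s > 8 / 5.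
Proof.
  intros Hpos Hs Hhd Hp.
  destruct s as [|s1 [|s2 [|s3 [|s4 [|H t]]]]]; simpl in Hp; try discriminate.
  assert (H1 : s1 <= 295/1000) by (apply Hhd; reflexivity).
  assert (HSS : StronglySorted Rge (s1 :: s2 :: s3 :: s4 :: H :: t)).
  { apply Sorted_StronglySorted; [intros x y z; lra | exact Hs]. }
  inversion HSS as [|? ? HSS2 F1]; subst.
  inversion HSS2 as [|? ? HSS3 F2]; subst.
  inversion HSS3 as [|? ? HSS4 F3]; subst.
  inversion HSS4 as [|? ? HSS5 F4]; subst.
  inversion HSS5 as [|? ? HSS6 F5]; subst.
  inversion F1 as [|? ? r12 F1']; subst.
  inversion F1' as [|? ? r13 F1'']; subst.
  inversion F1'' as [|? ? r14 F1''']; subst.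
  inversion F1''' as [|? ? r15 _]; subst.
  inversion F2 as [|? ? _ F2']; subst.
  inversion F2' as [|? ? _ F2'']; subst.
  inversion F2'' as [|? ? r25 _]; subst.
  inversion F3 as [|? ? _ F3']; subst.
  inversion F3' as [|? ? r35 _]; subst.
  inversion F4 as [|? ? r45 _]; subst.
  inversion Hpos as [|? ? p1 Hp2]; subst.
  inversion Hp2 as [|? ? p2 Hp3]; subst.
  inversion Hp3 as [|? ? p3 Hp4]; subst.
  inversion Hp4 as [|? ? p4 Hp5]; subst.
  inversion Hp5 as [|? ? p5 Hpt]; subst.
  destruct (Rle_dec H (1388/1000)) as [HL|HL]; [|lra].
  assert (Hf : Forall (fun x => 0 < x /\ x <= H) t).
  { apply Forall_forall; intros x Hx.
    split; [apply (proj1 (Forall_forall _ _) Hpt x Hx)|].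
    pose proof (proj1 (Forall_forall _ _) F5 x Hx). simpl in H0. lra. }
  assert (Hsrt : Sorted Rge (H :: t)).
  { inversion Hs; subst. inversion H3; subst. inversion H5; subst. inversion H7; subst. exact H9. }
  pose proof (key (1388/1000) H t 0 H H H ltac:(lra) Hsrt Hf Hp) as K.
  unfold Rmin in K. destruct (Rle_dec 0 (H * (H - H))); [|nra].
  assert (sum_sq (s1 :: s2 :: s3 :: s4 :: H :: t) = s1^2+s2^2+s3^2+s4^2+H^2+sum_sq t) as E
    by (unfold sum_sq; simpl; ring).
  rewrite E.
  assert (sqh : forall x, 0 < H -> x >= H -> x^2 >= H^2) by (intros; nra).
  pose proof (sqh s1 p5 r15). pose proof (sqh s2 p5 r25).
  pose proof (sqh s3 p5 r35). pose proof (sqh s4 p5 r45).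
  assert (0 <= 6 * (H - 1388/6000)^2) by (apply Rmult_le_pos; [lra|apply pow2_ge_0]).
  nra.
Qed.
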